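(* Let $n\ge2$ and let $\widehat T\subset\mathbb R^n$ be a Kuhn simplex. Then (i) $\operatorname{diam}(\widehat T)=R(\widehat T)=\sqrt n$; (ii) $w(\widehat T)=1/\sqrt2$; (iii) $1/r(\widehat T)=1+(n-1)/\sqrt2$; (iv) $\gamma(\widehat T)=\sqrt n\,(1+(n-1)/\sqrt2)$; (v) $2\gamma(\widehat T)\operatorname{diam}(\widehat T)/w(\widehat T)=2n(n+\sqrt2-1)$.
   Context: A Kuhn simplex is $[0,e_{\pi(1)},e_{\pi(1)}+e_{\pi(2)},\dots,e_{\pi(1)}+\dots+e_{\pi(n)}]$ for a permutation $\pi$ of $\{1,\dots,n\}$ and unit vectors $e_i$ of $\mathbb R^n$. For a simplex $S$: $R(S)$ is the diameter of the smallest ball containing $S$, $r(S)$ the diameter of the largest ball contained in $S$, $\gamma(S)=R(S)/r(S)$, and $w(S)=\min_f\sup_{x\in S}\operatorname{dist}(x,f)$ over the $(n-1)$-dimensional faces $f$ of $S$ (minimal height). *)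

(* Defs.v *)
From HB Require Import structures.
From mathcomp Require Import all_boot all_order all_algebra all_fingroup.
From mathcomp Require Import classical_sets reals.
Set Implicit Arguments. Unset Strict Implicit. Unset Printing Implicit Defensive.
Import Order.TTheory GRing.Theory Num.Theory.
Local Open Scope ring_scope.
Local Open Scope classical_set_scope.

Section Defs.
Variables (R : realType) (n : nat).

Definition enorm (x : 'rV[R]_n) : R := Num.sqrt (\sum_(i < n) x ord0 i ^+ 2).
Definition edist (x y : 'rV[R]_n) : R := enorm (x - y).

Definition cball (c : 'rV[R]_n) (rho : R) : set 'rV[R]_n :=
  [set y | edist y c <= rho].

Definition simplex (v : 'I_n.+1 -> 'rV[R]_n) : set 'rV[R]_n :=
  [set x | exists lam : 'I_n.+1 -> R,
     (forall i, 0 <= lam i) /\ \sum_i lam i = 1 /\ x = \sum_i lam i *: v i].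

Definition facet (v : 'I_n.+1 -> 'rV[R]_n) (k : 'I_n.+1) : set 'rV[R]_n :=
  [set x | exists lam : 'I_n.+1 -> R,
     (forall i, 0 <= lam i) /\ \sum_i lam i = 1 /\ lam k = 0 /\
     x = \sum_i lam i *: v i].

Definition dist_set (x : 'rV[R]_n) (A : set 'rV[R]_n) : R :=
  inf [set d | exists2 y, A y & d = edist x y].

Definition diam (S : set 'rV[R]_n) : R :=
  sup [set d | exists x y, S x /\ S y /\ d = edist x y].

Definition circum_diam (S : set 'rV[R]_n) : R :=
  inf [set d | exists c rho, 0 <= rho /\ S `<=` cball c rho /\ d = 2 * rho].

Definition in_diam (S : set 'rV[R]_n) : R :=
  sup [set d | exists c rho, 0 <= rho /\ cball c rho `<=` S /\ d = 2 * rho].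

Definition gamma_simplex (v : 'I_n.+1 -> 'rV[R]_n) : R :=
  circum_diam (simplex v) / in_diam (simplex v).

Definition min_height (v : 'I_n.+1 -> 'rV[R]_n) : R :=
  inf [set h | exists k : 'I_n.+1,
         h = sup [set d | exists2 x, simplex v x & d = dist_set x (facet v k)]].

Definition unitv (i : 'I_n) : 'rV[R]_n := delta_mx ord0 i.

Definition kuhn_vertices (pi : 'S_n) (k : 'I_n.+1) : 'rV[R]_n :=
  \sum_(j < n | (j < k)%N) unitv (pi j).

End Defs.

(* Main.v *)
Require Import Defs.
From HB Require Import structures.
From mathcomp Require Import all_boot all_order all_algebra all_fingroup.
From mathcomp Require Import classical_sets reals.
From mathcomp Require Import ring lra.
Set Implicit Arguments. Unset Strict Implicit. Unset Printing Implicit Defensive.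
Import Order.TTheory GRing.Theory Num.Theory.
Local Open Scope ring_scope.
Section K.
Local Open Scope classical_set_scope.
Variables (R : realType) (m : nat) (pi : 'S_m.+1).
Local Notation n := m.+1.
Local Notation V := (@kuhn_vertices R n pi).
Local Notation T := (simplex V).

Lemma sum_if1 (k : nat) (P : pred 'I_k) (a : 'I_k) (c : R) :
  \sum_(j | P j) (if j == a then c else 0) = if P a then c else 0.
Proof.
case Pa: (P a).
  rewrite (bigD1 a) //= eqxx big1 ?addr0 // => j /andP[_ /negbTE ->] //.
by rewrite big1 // => j Pj; case: eqP => // ja; rewrite ja Pa in Pj.
Qed.

Definition pinv (i : 'I_n) : 'I_n := ((pi^-1)%g i).

Lemma kvE (k : 'I_n.+1) i : V k ord0 i = ((pinv i < k)%N)%:R.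
Proof.
rewrite /kuhn_vertices summxE.
transitivity (\sum_(j < n | (j < k)%N) (if j == pinv i then 1 else 0 : R)).
  apply: eq_bigr => j _; rewrite /unitv mxE /=.
  have -> : (i == pi j) = (j == pinv i).
    apply/eqP/eqP => [->|->]; rewrite /pinv ?permK //.
    by rewrite -permM mulVg perm1.
  by case: eqP.
by rewrite sum_if1; case: ifP.
Qed.


Lemma pinv_pi j : pinv (pi j) = j.
Proof. by rewrite /pinv permK. Qed.
Lemma pi_pinv i : pi (pinv i) = i.
Proof. by rewrite /pinv permKV. Qed.

Definition Zc (x : 'rV[R]_n) (j : nat) : R :=
  if j == 0%N then 1 else if (j <= n)%N then x ord0 (pi (inord j.-1)) else 0.
Definition lam x (k : nat) := Zc x k - Zc x k.+1.

Lemma sum_scaleE (mu : 'I_n.+1 -> R) i :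
  (\sum_k mu k *: V k) ord0 i = \sum_k mu k * ((pinv i < k)%N)%:R.
Proof. by rewrite summxE; apply: eq_bigr => k _; rewrite mxE kvE. Qed.

Lemma leltE (a b : nat) : (((a <= b)%N)%:R - ((a < b)%N)%:R : R) = ((a == b))%:R.
Proof.
by case: (ltngtP a b) => h; rewrite /= ?subrr ?subr0.
Qed.

Lemma lam_comb (mu : 'I_n.+1 -> R) : \sum_k mu k = 1 ->
  forall k : 'I_n.+1, lam (\sum_k mu k *: V k) k = mu k.
Proof.
move=> s1.
have Z: forall j, Zc (\sum_k mu k *: V k) j = \sum_(k < n.+1) mu k * ((j <= k)%N)%:R.
  move=> [|j] /=; rewrite /Zc /=.
    by rewrite -{1}s1; apply: eq_bigr => k _; rewrite mulr1n mulr1.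
  case: ifP => jn.
    rewrite sum_scaleE; apply: eq_bigr => k _.
    by rewrite pinv_pi inordK.
  rewrite big1 // => k _.
  have : (k <= n)%N by rewrite -ltnS.
  by move=> kn; rewrite (_ : (j < k)%N = false) ?mulr0 //; apply/negbTE; rewrite -leqNgt; apply: leq_trans kn _; rewrite leqNgt jn.
move=> k; rewrite /lam !Z -sumrB.
transitivity (\sum_(i < n.+1 | true) (if i == k then mu k else 0)).
  apply: eq_bigr => i _; rewrite -mulrBr leltE.
  have -> : ((k:nat) == i) = (i == k) by rewrite eq_sym.
  by case: eqP => [->|_]; rewrite ?mulr1 ?mulr0.
by rewrite (@sum_if1 _ xpredT).
Qed.

Lemma tel (g : nat -> R) M p :
  \sum_(k < M) ((p < k)%N)%:R * (g k - g k.+1) = ((p < M)%N)%:R * (g p.+1 - g M).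
Proof.
elim: M => [|M IH]; first by rewrite big_ord0 mul0r.
rewrite big_ord_recr /= IH.
case: (ltngtP p M) => [pM|Mp|->].
- by rewrite ltnS (ltnW pM) /=; ring.
- by rewrite ltnS leqNgt Mp /=; ring.
- by rewrite ltnS leqnn /=; ring.
Qed.


Lemma tel0 (g : nat -> R) M : \sum_(k < M) (g k - g k.+1) = g 0%N - g M.
Proof.
elim: M => [|M IH]; first by rewrite big_ord0 subrr.
by rewrite big_ord_recr /= IH; ring.
Qed.

Lemma ZcN x : Zc x n.+1 = 0.
Proof. by rewrite /Zc /= ltnn. Qed.

Lemma comb_lam x : x = \sum_(k < n.+1) lam x k *: V k.
Proof.
apply/rowP => i; rewrite sum_scaleE.
rewrite (eq_bigr (fun k : 'I_n.+1 => ((pinv i < k)%N)%:R * (Zc x k - Zc x k.+1))); last first.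
  by move=> k _; rewrite mulrC.
rewrite tel ZcN subr0 ltnS (ltnW (ltn_ord _)) mul1r /Zc /= ltn_ord /= inord_val pi_pinv.
by [].
Qed.

Lemma sum_lam x : \sum_(k < n.+1) lam x k = 1.
Proof. by rewrite /lam tel0 ZcN subr0. Qed.

Lemma inT_lam x : T x -> forall k : 'I_n.+1, 0 <= lam x k.
Proof. by case=> mu [h0 [h1 ->]] k; rewrite lam_comb. Qed.

Lemma lam_inT x : (forall k : 'I_n.+1, 0 <= lam x k) -> T x.
Proof.
move=> h; exists (fun k => lam x k); split; first by [].
by split; [exact: sum_lam | exact: comb_lam].
Qed.

Lemma facetP x (k : 'I_n.+1) : facet V k x <-> T x /\ lam x k = 0.
Proof.
split.
  case=> mu [h0 [h1 [hk ->]]]; split; first by exists mu.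
  by rewrite lam_comb.
case=> /inT_lam h hk; exists (fun k => lam x k); split; first by [].
by split; [exact: sum_lam | split; [exact: hk | exact: comb_lam]].
Qed.

Definition Z0 (d : 'rV[R]_n) (j : nat) : R :=
  if j == 0%N then 0 else if (j <= n)%N then d ord0 (pi (inord j.-1)) else 0.
Definition W d (k : nat) := Z0 d k - Z0 d k.+1.

Lemma ZcB x y j : Zc x j - Zc y j = Z0 (x - y) j.
Proof.
rewrite /Zc /Z0; case: eqP => _; first by rewrite subrr.
by case: ifP => _; rewrite ?mxE ?subrr.
Qed.

Lemma lamB x y k : lam x k - lam y k = W (x - y) k.
Proof. by rewrite /lam /W -!ZcB; ring. Qed.

Lemma Z0Z a d j : Z0 (a *: d) j = a * Z0 d j.
Proof.
rewrite /Z0; case: eqP => _; first by rewrite mulr0.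
by case: ifP => _; rewrite ?mxE ?mulr0.
Qed.

Lemma WZ a d k : W (a *: d) k = a * W d k.
Proof. by rewrite /W !Z0Z mulrBr. Qed.

Definition nrm2 (d : 'rV[R]_n) := \sum_i d ord0 i ^+ 2.

Lemma edistE x y : edist x y = Num.sqrt (nrm2 (x - y)).
Proof. by []. Qed.

Lemma nrm2_ge0 d : 0 <= nrm2 d.
Proof. by apply: sumr_ge0 => i _; rewrite sqr_ge0. Qed.

Lemma coord_le (d : 'rV[R]_n) p : d ord0 p ^+ 2 <= nrm2 d.
Proof.
rewrite /nrm2 -(@sum_if1 _ xpredT p (d ord0 p ^+ 2)).
apply: ler_sum => i _; case: eqP => [->|_]; by rewrite ?sqr_ge0.
Qed.

Lemma coord2_le (d : 'rV[R]_n) p q : p != q -> d ord0 p ^+ 2 + d ord0 q ^+ 2 <= nrm2 d.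
Proof.
move=> pq.
rewrite /nrm2 -(@sum_if1 _ xpredT p (d ord0 p ^+ 2)) -(@sum_if1 _ xpredT q (d ord0 q ^+ 2)).
rewrite -big_split /=; apply: ler_sum => i _.
have [->|ip] := eqVneq i p.
  by rewrite (negbTE pq) addr0.
by rewrite add0r; case: eqP => [->|_]; rewrite ?sqr_ge0.

Qed.


Definition A (k : nat) : R := ((0 < k)%N)%:R + ((k < n)%N)%:R.

Lemma W_bound d (k : 'I_n.+1) : W d k ^+ 2 <= A k * nrm2 d.
Proof.
case: k => [[|k] hk]; rewrite /W /Z0 /A /=.
  by rewrite sub0r sqrrN add0r mul1r coord_le.
rewrite ltnS in hk; rewrite hk.
case: ifP => h.
  have pq : pi (inord k) != pi (inord k.+1) :> 'I_n.
    by rewrite (inj_eq perm_inj) -val_eqE /= !inordK // (ltn_eqF (ltnSn k)).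
  have := coord2_le d pq.
  set a := d ord0 _; set b := d ord0 _ => hab.
  have := sqr_ge0 (a + b); rewrite /=; nra.
by rewrite subr0 addr0 mul1r coord_le.
Qed.


Definition gv (k : nat) : 'rV[R]_n :=
  ((0 < k)%N)%:R *: unitv R (pi (inord k.-1)) - ((k < n)%N)%:R *: unitv R (pi (inord k)).

Lemma gvE k i : gv k ord0 i =
  ((0 < k)%N && (i == pi (inord k.-1)))%:R - ((k < n)%N && (i == pi (inord k)))%:R.
Proof. by rewrite /gv /unitv !mxE eqxx /= -!natrM !mulnb. Qed.

Lemma Z0g (k : nat) j : (k <= n)%N ->
  Z0 (gv k) j = ((0 < j)%N && (j <= n)%N)%:R * ((j == k)%:R - (j == k.+1)%:R).
Proof.
move=> kn; rewrite /Z0; case: j => [|j] /=; first by rewrite mul0r.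
case: ifP => jn /=; last by rewrite mul0r.
rewrite gvE mul1r (inj_eq perm_inj) (inj_eq perm_inj) eqSS.
case: k kn => [|k] kn /=.
  by rewrite -val_eqE /= !inordK.
rewrite -val_eqE /= (inordK jn) (inordK kn).
case h: (k.+1 < n)%N => /=.
  by rewrite -val_eqE /= !inordK.
have -> : (j == k.+1) = false; last by [].
by apply/negbTE; apply/eqP => e; rewrite e h in jn.
Qed.

Lemma Wg_diag (k : 'I_n.+1) : W (gv k) k = A k.
Proof.
have kn : (k <= n)%N by rewrite -ltnS.
rewrite /W !Z0g // /A eqxx (gtn_eqF (ltnSn k)) (ltn_eqF (ltnSn k)) eqxx kn andbT /=.
by ring.
Qed.

Lemma Wg_off (k j : nat) : (k <= n)%N -> j != k -> W (gv k) j <= 0.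
Proof.
move=> kn jk; rewrite /W !Z0g // (negbTE jk) eqSS (negbTE jk) sub0r subr0.
rewrite mulrN -opprD oppr_le0 addr_ge0 // mulr_ge0 //.
Qed.

Lemma gv_nrm (k : nat) : nrm2 (gv k) <= A k.
Proof.
rewrite /nrm2 /A.
have h : forall i, gv k ord0 i ^+ 2 <= ((0 < k)%N && (i == pi (inord k.-1)))%:R + ((k < n)%N && (i == pi (inord k)))%:R.
  by move=> i; rewrite gvE; case: (_ && _); case: (_ && _); rewrite /=; lra.
apply: le_trans (ler_sum _ (fun i _ => h i)) _.
rewrite big_split /=.
have s : forall (b : bool) (p : 'I_n), \sum_(i < n) (b && (i == p))%:R = b%:R :> R.
  move=> b p; rewrite -(@sum_if1 _ xpredT p b%:R); apply: eq_bigr => i _.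
  by case: eqP; rewrite ?andbT ?andbF.
by rewrite !s.
Qed.


Lemma sup_eqP (E : set R) a : E a -> (forall x, E x -> x <= a) -> sup E = a.
Proof.
move=> Ea ub; apply/le_anti/andP; split.
  by apply: ge_sup; [exists a | exact: ub].
by apply: ub_le_sup; [exists a; exact: ub | exact: Ea].
Qed.

Lemma inf_eqP (E : set R) a : E a -> (forall x, E x -> a <= x) -> inf E = a.
Proof.
move=> Ea lb; apply/le_anti/andP; split.
  by apply: ge_inf; [exists a; exact: lb | exact: Ea].
by apply: lb_le_inf; [exists a | exact: lb].
Qed.

Lemma sqrt_le (S t : R) : 0 <= t -> S <= t ^+ 2 -> Num.sqrt S <= t.
Proof. by move=> t0 h; rewrite -(ger0_norm t0) -sqrtr_sqr ler_wsqrtr. Qed.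

Lemma sqrt_ge (S t : R) : 0 <= t -> t ^+ 2 <= S -> t <= Num.sqrt S.
Proof. by move=> t0 h; rewrite -(ger0_norm t0) -sqrtr_sqr ler_wsqrtr. Qed.

Lemma sqrt_le_sq (S t : R) : 0 <= S -> Num.sqrt S <= t -> S <= t ^+ 2.
Proof.
move=> S0 h; have := sqrtr_ge0 S; have := sqr_sqrtr S0; nra.
Qed.

Lemma sum_one (i : 'I_n.+1) : \sum_(j < n.+1) ((j == i)%:R : R) = 1.
Proof.
rewrite (eq_bigr (fun j : 'I_n.+1 => if j == i then 1 else 0)); first by rewrite (@sum_if1 _ xpredT).
by move=> j _; case: eqP.
Qed.

Lemma V_comb (i : 'I_n.+1) : V i = \sum_j ((j == i)%:R : R) *: V j.
Proof.
rewrite (bigD1 i) //= eqxx scale1r big1 ?addr0 // => j /negbTE ->.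
by rewrite scale0r.
Qed.

Lemma lamV (i j : 'I_n.+1) : lam (V i) j = (j == i)%:R.
Proof. by rewrite {1}V_comb lam_comb // sum_one. Qed.

Lemma VinT (i : 'I_n.+1) : T (V i).
Proof. by apply: lam_inT => j; rewrite lamV. Qed.

Lemma coordT x i : T x -> 0 <= x ord0 i <= 1.
Proof.
case=> mu [h0 [h1 ->]]; rewrite sum_scaleE; apply/andP; split.
  by apply: sumr_ge0 => k _; rewrite mulr_ge0.
rewrite -[X in _ <= X]h1; apply: ler_sum => k _.
by case: (_ < _)%N; rewrite /= ?mulr1 ?mulr0.
Qed.

Lemma sum_constn (c : R) : \sum_(i < n) c = c * n%:R.
Proof. by rewrite sumr_const card_ord mulr_natr. Qed.

Lemma diamT : diam T = Num.sqrt n%:R.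
Proof.
rewrite /diam; apply: sup_eqP.
  exists (V ord_max), (V ord0); split; first exact: VinT.
  split; first exact: VinT.
  rewrite edistE; congr Num.sqrt.
  rewrite /nrm2 -[n%:R]mul1r -sum_constn; apply: eq_bigr => i _.
  by rewrite !mxE !kvE /= ltn_ord subr0 expr1n.
move=> d [x [y [Tx [Ty ->]]]]; rewrite edistE ler_wsqrtr //.
rewrite /nrm2 -[n%:R]mul1r -sum_constn; apply: ler_sum => i _.
move: (coordT i Tx) (coordT i Ty) => /andP[? ?] /andP[? ?]; rewrite !mxE; nra.
Qed.


Lemma circumT : circum_diam T = Num.sqrt n%:R.
Proof.
have n0 : (0 : R) <= n%:R by [].
rewrite /circum_diam; apply: inf_eqP.
  exists (const_mx (1/2)), (Num.sqrt n%:R / 2); split.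
    by rewrite divr_ge0 ?sqrtr_ge0.
  split; last by field.
  move=> x Tx; rewrite /cball /= edistE; apply: sqrt_le.
    by rewrite divr_ge0 ?sqrtr_ge0.
  rewrite expr_div_n sqr_sqrtr // /nrm2.
  have -> : n%:R / 2 ^+ 2 = \sum_(i < n) (1/4 : R).
    by rewrite sum_constn; field.
  apply: ler_sum => i _; move: (coordT i Tx) => /andP[? ?]; rewrite !mxE; nra.
move=> d [c [rho [r0 [sub ->]]]].
apply: sqrt_le; first by rewrite mulr_ge0.
have h0 := sub _ (VinT ord0); have h1 := sub _ (VinT ord_max).
rewrite /cball /= edistE in h0 h1.
move/(sqrt_le_sq (nrm2_ge0 _)): h0; move/(sqrt_le_sq (nrm2_ge0 _)): h1.
rewrite /nrm2 => h1 h0.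
have : \sum_(i < n) (1/2 : R) <= rho ^+ 2 + rho ^+ 2.
  apply: le_trans (lerD h0 h1); rewrite -big_split /=; apply: ler_sum => i _.
  rewrite !mxE !kvE /= ltn_ord (_ : (true%:R : R) = 1) //; have := sqr_ge0 (c ord0 i - 1/2); nra.
rewrite sum_constn; nra.
Qed.


Lemma A_le2 k : A k <= 2.
Proof. by rewrite /A; case: (_ < _)%N; case: (_ < _)%N; rewrite /=; lra. Qed.

Lemma A_ge1 (k : 'I_n.+1) : 1 <= A k.
Proof.
rewrite /A; case: k => [[|k] hk] /=; first by lra.
by case: (_ < _)%N; rewrite /=; lra.
Qed.

Lemma lam_diff_le x y (k : 'I_n.+1) : (lam x k - lam y k) ^+ 2 <= 2 * nrm2 (x - y).
Proof.
rewrite lamB; apply: le_trans (W_bound _ _) _.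
by apply: ler_wpM2r; [exact: nrm2_ge0 | exact: A_le2].
Qed.

Lemma edistT_le x y : T x -> T y -> edist x y <= Num.sqrt n%:R.
Proof.
move=> Tx Ty; rewrite edistE ler_wsqrtr //.
rewrite /nrm2 -[n%:R]mul1r -sum_constn; apply: ler_sum => i _.
move: (coordT i Tx) (coordT i Ty) => /andP[? ?] /andP[? ?]; rewrite !mxE; nra.
Qed.

Definition oth (k : 'I_n.+1) : 'I_n.+1 := if k == ord0 then ord_max else ord0.

Lemma oth_facet k : facet V k (V (oth k)).
Proof.
apply/facetP; split; first exact: VinT.
rewrite lamV /oth; case: (k =P ord0) => [->|/eqP kn] /=.
  by [].
by rewrite (negbTE kn).
Qed.

Lemma dist_set_le x (F : set 'rV[R]_n) y : F y -> dist_set x F <= edist x y.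
Proof.
move=> Fy; apply: ge_inf; last by exists y.
by exists 0 => d [z _ ->]; exact: sqrtr_ge0.
Qed.

Lemma dist_facet_ub x k : T x -> dist_set x (facet V k) <= Num.sqrt n%:R.
Proof.
move=> Tx; apply: le_trans (dist_set_le x (oth_facet k)) _.
by apply: edistT_le => //; exact: VinT.
Qed.

Lemma sqrt2_gt0 : (0 : R) < Num.sqrt 2.
Proof. by rewrite sqrtr_gt0. Qed.

Lemma inv_sqrt2_sq : (1 / Num.sqrt 2 : R) ^+ 2 = 1 / 2.
Proof. by rewrite expr_div_n expr1n sqr_sqrtr. Qed.

Lemma dist_facet_lb (k : 'I_n.+1) : 1 / Num.sqrt 2 <= dist_set (V k) (facet V k).
Proof.
apply: lb_le_inf; first by exists (edist (V k) (V (oth k))), (V (oth k)); first exact: oth_facet.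
move=> d [y /facetP [Ty hy] ->]; rewrite edistE; apply: sqrt_ge.
  by rewrite divr_ge0 // ltW // sqrt2_gt0.
rewrite inv_sqrt2_sq; have := lam_diff_le (V k) y k.
by rewrite lamV eqxx hy subr0 expr1n; lra.
Qed.

Definition H (k : 'I_n.+1) := sup [set d | exists2 x, T x & d = dist_set x (facet V k)].

Lemma H_lb k : 1 / Num.sqrt 2 <= H k.
Proof.
apply: le_trans (dist_facet_lb k) _.
apply: ub_le_sup; last by exists (V k); first exact: VinT.
by exists (Num.sqrt n%:R) => d [x Tx ->]; exact: dist_facet_ub.
Qed.


Lemma lam_shift x t (k j : nat) : lam (x - t *: gv k) j = lam x j - t * W (gv k) j.
Proof.
have := lamB (x - t *: gv k) x j.
rewrite (_ : x - t *: gv k - x = (- t) *: gv k); last first.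
  by rewrite addrAC subrr add0r scaleNr.
by rewrite WZ => e; rewrite -[LHS](subrK (lam x j)) e; ring.
Qed.

Lemma nrm2Z t d : nrm2 (t *: d) = t ^+ 2 * nrm2 d.
Proof. by rewrite /nrm2 mulr_sumr; apply: eq_bigr => i _; rewrite mxE exprMn. Qed.

Lemma lam_le1 x (k : 'I_n.+1) : T x -> lam x k <= 1.
Proof.
move=> Tx; rewrite -(sum_lam x) (bigD1 k) //= lerDl.
by apply: sumr_ge0 => i _; exact: inT_lam.
Qed.

Section M1.
Hypothesis m1 : (0 < m)%N.

Definition k1 : 'I_n.+1 := inord 1.

Lemma k1E : (k1 : nat) = 1%N.
Proof. by rewrite inordK. Qed.

Lemma A1 : A k1 = 2.
Proof. by rewrite /A k1E /= ltnS m1. Qed.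

Lemma H1_ub : H k1 <= 1 / Num.sqrt 2.
Proof.
apply: ge_sup; first by exists (dist_set (V ord0) (facet V k1)), (V ord0); first exact: VinT.
move=> d [x Tx ->].
set t := lam x k1 / 2.
have t0 : 0 <= t by rewrite divr_ge0 // inT_lam.
have kn : (k1 <= n)%N by rewrite -ltnS.
have Fy : facet V k1 (x - t *: gv k1).
  apply/facetP; split.
    apply: lam_inT => j; rewrite lam_shift.
    have [->|jk] := eqVneq j k1.
      by rewrite Wg_diag A1 /t; have := inT_lam Tx k1; lra.
    have := Wg_off kn (jk : (j : nat) != k1); have := inT_lam Tx j; nra.
  by rewrite lam_shift Wg_diag A1 /t; field.
apply: le_trans (dist_set_le x Fy) _.
rewrite edistE (_ : x - (x - t *: gv k1) = t *: gv k1); last by rewrite opprB addrC subrK.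
apply: sqrt_le; first by rewrite divr_ge0 // ltW // sqrt2_gt0.
rewrite inv_sqrt2_sq nrm2Z.
have := gv_nrm k1; rewrite A1 => g2.
have := lam_le1 k1 Tx; have := inT_lam Tx k1; rewrite /t => a b.
have := nrm2_ge0 (gv k1); nra.
Qed.

Lemma min_heightT : min_height V = 1 / Num.sqrt 2.
Proof.
rewrite /min_height; apply: inf_eqP.
  by exists k1; apply/le_anti/andP; split; [exact: H_lb | exact: H1_ub].
by move=> h [k ->]; exact: H_lb.
Qed.

End M1.

Definition S := \sum_(k < n.+1) Num.sqrt (A k).
Definition rho := 1 / S.

Lemma sA_ge1 (k : 'I_n.+1) : 1 <= Num.sqrt (A k).
Proof. by rewrite -sqrtr1 ler_wsqrtr // A_ge1. Qed.

Lemma S_gt0 : 0 < S.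
Proof.
rewrite /S; apply: (lt_le_trans _ (ler_sum _ (fun (k : 'I_n.+1) _ => sA_ge1 k))).
by rewrite sumr_const card_ord ltr0n.
Qed.

Lemma rho_ge0 : 0 <= rho.
Proof. by rewrite /rho divr_ge0 // ltW // S_gt0. Qed.

Definition cc := \sum_(k < n.+1) (rho * Num.sqrt (A k)) *: V k.

Lemma lam_cc (k : 'I_n.+1) : lam cc k = rho * Num.sqrt (A k).
Proof.
rewrite /cc lam_comb // -mulr_sumr /rho -/S mul1r mulVf //.
by rewrite gt_eqF // S_gt0.
Qed.

Lemma sq_le_abs (w t : R) : 0 <= t -> w ^+ 2 <= t ^+ 2 -> - t <= w <= t.
Proof.
move=> t0 h; rewrite -ler_norml.
have := @ler_sqr R `|w| t; rewrite !nnegrE normr_ge0 => /(_ isT t0) <-.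
by rewrite real_normK ?num_real.
Qed.

Lemma ball_in : cball cc rho `<=` T.
Proof.
move=> x; rewrite /cball /= edistE => /(sqrt_le_sq (nrm2_ge0 _)) h.
apply: lam_inT => k.
have e : lam x k = lam cc k + W (x - cc) k by rewrite -lamB; ring.
rewrite e lam_cc.
have hw := W_bound (x - cc) k.
have sA := sqr_sqrtr (le_trans ler01 (A_ge1 k)).
have s0 := sqrtr_ge0 (A k).
have r0 := rho_ge0.
set w := W _ _ in hw *; set s := Num.sqrt _ in sA s0 *.
have hn := nrm2_ge0 (x - cc).
rewrite -sA in hw.
have : w ^+ 2 <= (s * rho) ^+ 2.
  apply: le_trans hw _; rewrite exprMn; apply: ler_wpM2l => //; exact: sqr_ge0.
move/sq_le_abs => /(_ (mulr_ge0 s0 r0)) /andP[hl _].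
by rewrite mulrC; lra.
Qed.

Lemma ball_ub c r : 0 <= r -> cball c r `<=` T -> r <= rho.
Proof.
move=> r0 sub.
have key : forall k : 'I_n.+1, r * Num.sqrt (A k) <= lam c k.
  move=> k.
  have A1 := A_ge1 k.
  have sA := sqr_sqrtr (le_trans ler01 A1).
  have s1 := sA_ge1 k.
  set s := Num.sqrt _ in sA s1 *.
  have s0 : s != 0 by rewrite gt_eqF // (lt_le_trans ltr01 s1).
  have kn : (k <= n)%N by rewrite -ltnS.
  have Tx : T (c - (r / s) *: gv k).
    apply: sub; rewrite /cball /= edistE.
    rewrite (_ : c - (r / s) *: gv k - c = (- (r / s)) *: gv k); last by rewrite addrAC subrr add0r scaleNr.
    apply: sqrt_le => //; rewrite nrm2Z sqrrN.
    apply: le_trans (ler_wpM2l (sqr_ge0 _) (gv_nrm k)) _.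
    by rewrite -sA expr_div_n mulrC mulrA mulrC mulrA mulVf ?mul1r // expf_neq0.
  have := inT_lam Tx k; rewrite lam_shift Wg_diag -sA.
  have e : r / s * s ^+ 2 = r * s by field.
  by rewrite e; lra.
suff : r * S <= 1.
  by rewrite /rho => h; rewrite ler_pdivlMr ?S_gt0 // mul1r.
rewrite -(sum_lam c) /S mulr_sumr; apply: ler_sum => k _; exact: key.
Qed.

Lemma in_diamT : in_diam T = 2 * rho.
Proof.
rewrite /in_diam; apply: sup_eqP.
  by exists cc, rho; split; [exact: rho_ge0 | split; [exact: ball_in | by []]].
move=> d [c [r [r0 [sub ->]]]].
by apply: ler_wpM2l => //; apply: ball_ub sub.
Qed.

Lemma S_val : S = 2 + m%:R * Num.sqrt 2.
Proof.
rewrite /S big_ord_recl big_ord_recr /=.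
rewrite (eq_bigr (fun _ => Num.sqrt 2)); last first.
  move=> i _; rewrite /A /bump /= add1n ltnS ltn_ord; congr Num.sqrt; rewrite /=; ring.
have a0 : A 0 = 1 by rewrite /A /=; ring.
have an : A (bump 0 m) = 1 by rewrite /A /bump /= add1n ltnn /=; ring.
rewrite a0 an sqrtr1 sumr_const card_ord mulr_natl; ring.
Qed.

End K.


Unset Implicit Arguments.

Theorem lemmaA5 (R : realType) (n : nat) (hn : (2 <= n)%N) (pi : 'S_n) :
  let T := simplex (@kuhn_vertices R n pi) in
  [/\ diam T = Num.sqrt (n%:R : R) /\ circum_diam T = Num.sqrt (n%:R : R),
      min_height (@kuhn_vertices R n pi) = 1 / Num.sqrt 2,
      1 / in_diam T = 1 + (n%:R - 1) / Num.sqrt 2,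
      gamma_simplex (@kuhn_vertices R n pi)
        = Num.sqrt (n%:R : R) * (1 + (n%:R - 1) / Num.sqrt 2) &
      2 * gamma_simplex (@kuhn_vertices R n pi) * diam T
        / min_height (@kuhn_vertices R n pi)
        = 2 * n%:R * (n%:R + Num.sqrt 2 - 1)].
Proof.
case: n hn pi => [|[|m]] // hn pi T.
have d := diamT R pi; have c := circumT R pi.
have mh := min_heightT R pi (ltn0Sn m).
have s2 : (0 : R) < Num.sqrt 2 by rewrite sqrtr_gt0.
have e2 : Num.sqrt 2 * Num.sqrt 2 = 2 :> R by rewrite -expr2 sqr_sqrtr.
have eN : (m.+2%:R : R) - 1 = m.+1%:R by rewrite [m.+2%:R]mulrSr addrK.
have k0 : (0 : R) < m.+1%:R by rewrite ltr0n.
have iii : 1 / in_diam T = 1 + (m.+2%:R - 1) / Num.sqrt 2.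
  rewrite /T in_diamT /rho S_val eN.
  have h : (Num.sqrt 2)^-1 = Num.sqrt 2 / 2 :> R.
    by rewrite -[X in _ = _ / X]e2; field; rewrite gt_eqF.
  rewrite h; field.
  by rewrite !gt_eqF //; nra.
have gam : gamma_simplex (@kuhn_vertices R _ pi) = Num.sqrt (m.+2%:R) * (1 + (m.+2%:R - 1) / Num.sqrt 2).
  by rewrite /gamma_simplex c -iii div1r.
split => //.
rewrite gam /T d mh.
set sn := Num.sqrt _; set s := Num.sqrt 2.
have en : sn * sn = m.+2%:R by rewrite -expr2 sqr_sqrtr // ler0n.
have -> : 2 * (sn * (1 + (m.+2%:R - 1) / s)) * sn / (1 / s) = 2 * (sn * sn) * (s + m.+2%:R - 1).
  by field; rewrite gt_eqF.
by rewrite en; ring.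
Qed.
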